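(* Let $G$ be a graph with $n\ge 3$ vertices and $s\ge 3$ edges $e_1,\dots,e_s$, where $e_i=u_iv_i$, and suppose $G$ has finite girth $g$. Let $m\in\mathbb{N}$ and let $\mathcal{H}=(L,H)$ be an $m$-fold cover of $G$ such that $|E_H(L(u),L(v))|=m$ for every $uv\in E(G)$. Let $\mathcal{U}=\{I\subseteq V(H): |L(v)\cap I|=1 \text{ for each } v\in V(G)\}$, and for $i\in[s]$ let $S_i$ be the set of $I\in\mathcal{U}$ such that $H[I]$ contains an edge of $E_H(L(u_i),L(v_i))$. Then: (i) For every $k\in[g-1]$ and all indices $1\le i_1<\cdots<i_k\le s$, $\left|\bigcap_{j=1}^k S_{i_j}\right| = m^{n-k}$. (ii) If $e_{i_1},\dots,e_{i_g}$ are $g$ distinct edges of $G$, then $\left|\bigcap_{j=1}^g S_{i_j}\right|\le m^{n-g+1}$; moreover, if $e_{i_1},\dots,e_{i_g}$ are not the edge set of a $g$-cycle of $G$, then $\left|\bigcap_{j=1}^g S_{i_j}\right| = m^{n-g}$. (iii) For every $k\ge g+1$ and all indices $1\le i_1<\cdots<i_k\le s$, $\left|\bigcap_{j=1}^k S_{i_j}\right| \le m^{n-g}$.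
   Context: All graphs are finite and simple; $[m]=\{1,\dots,m\}$. The girth of a graph is the length of a shortest cycle. For $S,U \subseteq V(H)$, $E_H(S,U)$ is the set of edges of $H$ with one endpoint in $S$ and the other in $U$. A cover of a graph $G$ is a pair $\mathcal{H}=(L,H)$ where $H$ is a graph and $L: V(G)\to \mathcal{P}(V(H))$ satisfies: (1) $\{L(u): u\in V(G)\}$ is a partition of $V(H)$; (2) for each $u \in V(G)$, $H[L(u)]$ is complete; (3) if $E_H(L(u),L(v))\neq\emptyset$ then $u=v$ or $uv\in E(G)$; (4) if $uv \in E(G)$ then $E_H(L(u),L(v))$ is a matching (possibly empty). The cover is $m$-fold if $|L(u)|=m$ for all $u\in V(G)$. $H[I]$ denotes the subgraph of $H$ induced by $I$. *)

(* Defs.v *)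
From mathcomp Require Import all_boot.
Set Implicit Arguments. Unset Strict Implicit. Unset Printing Implicit Defensive.

Definition simple_graph (T : finType) (e : rel T) : Prop :=
  symmetric e /\ irreflexive e.

Definition is_cycle (T : finType) (e : rel T) (c : seq T) : bool :=
  [&& uniq c, 2 < size c & cycle e c].

Definition has_girth (T : finType) (e : rel T) (g : nat) : Prop :=
  (exists c, is_cycle e c /\ size c = g) /\
  (forall c, is_cycle e c -> g <= size c).

Definition cycle_edges (T : finType) (c : seq T) : {set {set T}} :=
  [set [set x; next c x] | x in [set y | y \in c]].

Definition cross_edges (W : finType) (hE : rel W) (A B : {set W}) :
  {set {set W}} :=
  [set [set x; y] | x in A, y in B & hE x y].

Definition is_cover (V W : finType) (e : rel V) (hE : rel W)
  (L : V -> {set W}) : Prop :=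
  [/\
      (forall w, exists u, w \in L u),
      (forall u v, u != v -> [disjoint L u & L v]),
      (forall u x y, x \in L u -> y \in L u -> x != y -> hE x y),
      (forall u v x y, x \in L u -> y \in L v -> hE x y -> u = v \/ e u v) &
      (forall u v, e u v -> forall x y y',
         x \in L u -> y \in L v -> y' \in L v -> hE x y -> hE x y' -> y = y')].

Definition is_mfold_cover (V W : finType) (e : rel V) (hE : rel W)
  (L : V -> {set W}) (m : nat) : Prop :=
  is_cover e hE L /\ forall u, #|L u| = m.

Definition transversals (V W : finType) (L : V -> {set W}) : {set {set W}} :=
  [set I : {set W} | [forall v, #|L v :&: I| == 1]].

Definition S_edge (V W : finType) (hE : rel W) (L : V -> {set W}) (a b : V)
  : {set {set W}} :=
  [set I in transversals L |
     [exists x, exists y, [&& x \in I, y \in I &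
        [set x; y] \in cross_edges hE (L a) (L b)]]].

(* Main.v *)
Require Import Defs.
From mathcomp Require Import all_boot zify.
Set Implicit Arguments. Unset Strict Implicit. Unset Printing Implicit Defensive.


Section Cyc.
Variable T : finType.

Lemma next_facts (c : seq T) x : uniq c -> 2 < size c -> x \in c ->
  next c x != x /\ next c (next c x) != x.
Proof.
move=> Uc Sc xc.
have Ur : uniq (rot (index x c) c) by rewrite rot_uniq.
rewrite -!(next_rot (index x c) Uc).
have : rot (index x c) c = x :: drop (index x c).+1 c ++ take (index x c) c.
  by rewrite /rot (drop_nth x) ?index_mem // nth_index.
move: Ur; set r := rot _ c => Ur Er.
have : size r = size c by rewrite size_rot.
rewrite Er; case Eq: (drop _ c ++ take _ c) => [|y [|z q]] //= Hs.
- by rewrite -Hs in Sc.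
- by rewrite -Hs in Sc.
move: Ur; rewrite Er Eq /= !inE => /andP[/norP[xy /norP[xz _]] /andP[/norP[yz _] _]].
rewrite /= eqxx (negbTE (_ : y != x)); last by rewrite eq_sym.
by rewrite eqxx eq_sym.

Qed.

Lemma card_cycle_edges (c : seq T) : uniq c -> 2 < size c ->
  #|cycle_edges c| = size c.
Proof.
move=> Uc Sc; rewrite /cycle_edges card_in_imset.
  by rewrite cardsE; apply/card_uniqP.
move=> x y; rewrite !inE => xc yc /setP E.
apply/eqP; apply/negP => /negP xy.
have := E x; rewrite !inE eqxx /= => /esym /orP[/eqP yx|/eqP nyx].
  by rewrite yx eqxx in xy.
have := E y; rewrite !inE eqxx /= => /orP[/eqP yx|/eqP nxy]; first by rewrite yx eqxx in xy.
have [_ ] := next_facts Uc Sc xc.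
by rewrite -nxy -nyx eqxx.
Qed.

Lemma deg_cycle_edges (c : seq T) x : uniq c -> 2 < size c ->
  #|[set E in cycle_edges c | x \in E]| = (x \in c).*2.
Proof.
move=> Uc Sc; case xc: (x \in c); last first.
  apply/eqP; rewrite cards_eq0; apply/eqP/setP => E; rewrite !inE.
  apply/negP => /andP[/imsetP[y]]; rewrite inE => yc -> /set2P[] xy.
    by rewrite xy yc in xc.
  by rewrite xy mem_next yc in xc.
have [nx nnx] := next_facts Uc Sc xc.
have -> : [set E in cycle_edges c | x \in E] =
          [set [set x; next c x]; [set prev c x; x]].
  apply/setP => E; rewrite !inE; apply/andP/orP.
    case=> /imsetP[y]; rewrite inE => yc -> /set2P[] xy.
      by left; rewrite xy.
    by right; rewrite xy prev_next // setUC.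
  case=> /eqP ->; split.
  - by apply/imsetP; exists x; rewrite ?inE.
  - by rewrite !inE eqxx.
  - apply/imsetP; exists (prev c x); first by rewrite inE mem_prev.
    by rewrite next_prev // setUC.
  - by rewrite !inE eqxx orbT.
rewrite cards2 /=; case: eqP => // /setP E.
have := E (next c x); rewrite !inE eqxx /= (negbTE nx) orbF => /esym/eqP np.
by move: nnx; rewrite np next_prev // eqxx.
Qed.
End Cyc.


Section Graph.
Variables (V : finType) (e : rel V) (s : nat) (u v : 'I_s -> V).
Hypothesis esym : symmetric e.
Hypothesis eirr : irreflexive e.
Hypothesis euv : forall i, e (u i) (v i).
Hypothesis inj : forall i j, i != j -> [set u i; v i] != [set u j; v j].

Definition Eset (K : {set 'I_s}) := [set [set u i; v i] | i in K].
Definition leafb (K0 : {set 'I_s}) x i :=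
  [&& i \in K0, x \in [set u i; v i] &
      [forall j in K0, (x \in [set u j; v j]) ==> (j == i)]].
Definition adj (K0 : {set 'I_s}) x y :=
  [exists i in K0, [set x; y] == [set u i; v i]].

Lemma adj_sym K0 : symmetric (adj K0).
Proof. by move=> x y; rewrite /adj setUC. Qed.

Lemma uv_neq i : u i != v i.
Proof. by apply: contraTneq (euv i) => ->; rewrite eirr. Qed.

Lemma set2_e x y i : [set x; y] = [set u i; v i] -> e x y.
Proof.
move=> E; have uin : u i \in [set x; y] by rewrite E !inE eqxx.
have vin : v i \in [set x; y] by rewrite E !inE eqxx orbT.
have := uv_neq i.
case/set2P: uin => ui; case/set2P: vin => vi; rewrite ui vi ?eqxx // => _.
- by rewrite -ui -vi euv.
- by rewrite esym -ui -vi euv.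
Qed.

Lemma adj_e K0 x y : adj K0 x y -> e x y.
Proof. by case/existsP => i /andP[_ /eqP /set2_e]. Qed.

Lemma edge_uniq i j : [set u i; v i] = [set u j; v j] -> i = j.
Proof. by move=> E; case: (eqVneq i j) => // /inj; rewrite E eqxx. Qed.

Definition leafless (K0 : {set 'I_s}) := forall x i, i \in K0 -> x \in [set u i; v i] ->
  exists j, [/\ j \in K0, j != i & x \in [set u j; v j]].

Lemma other_eq x j : x \in [set u j; v j] ->
  [set x; if x == u j then v j else u j] = [set u j; v j].
Proof. by case/set2P => ->; rewrite ?eqxx // eq_sym (negbTE (uv_neq j)) setUC. Qed.

Lemma step K0 x p : leafless K0 -> uniq (x :: p) -> path (adj K0) x p -> p != [::] ->
  (exists c, [/\ uniq c, 2 < size c & cycle (adj K0) c]) \/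
  (exists w, uniq (w :: x :: p) /\ path (adj K0) w (x :: p)).
Proof.
move=> LL; case: p => [|y q] // U P _.
have /existsP[i /andP[iK /eqP Ei]] : adj K0 x y by case/andP: P.
have xi : x \in [set u i; v i] by rewrite -Ei !inE eqxx.
have [j [jK ji xj]] := LL x i iK xi.
set w := if x == u j then v j else u j.
have Ew := other_eq xj; rewrite -/w in Ew.
have axw : adj K0 x w by apply/existsP; exists j; rewrite jK Ew eqxx.
have wy : w != y.
  by apply: contraNneq ji => wy; apply/eqP/edge_uniq; rewrite -Ew -Ei wy.
have wx : w != x.
  by apply: contraTneq (adj_e axw) => ->; rewrite eirr.
case wq: (w \in x :: y :: q); last first.
  right; exists w; split; first by rewrite cons_uniq wq U.
  by rewrite /= adj_sym axw.
left; move: wq; rewrite !inE (negbTE wx) (negbTE wy) /= => wq.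
case/splitPr: wq U P => q1 q2 U P.
exists (x :: y :: q1 ++ [:: w]); split.
- have E : x :: y :: q1 ++ w :: q2 = (x :: y :: q1 ++ [:: w]) ++ q2 by rewrite /= -catA.
  by move: U; rewrite E cat_uniq => /andP[].
- by rewrite /= size_cat /= addnS.
- rewrite /cycle rcons_path /= last_cat /= [adj K0 w x]adj_sym axw andbT.
  move: P; rewrite /= !cat_path /= andbT.
  by case/andP => -> /andP[-> /andP[-> _]].
Qed.

Lemma grow K0 n : leafless K0 -> forall x p, #|V| - size p <= n ->
  uniq (x :: p) -> path (adj K0) x p -> p != [::] ->
  exists c, [/\ uniq c, 2 < size c & cycle (adj K0) c].
Proof.
move=> LL; elim: n => [|n IH] x p Hn U P p0;
  case: (step LL U P p0) => // -[w [Uw Pw]].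
  have Hc := card_uniqP Uw.
  have := max_card (mem (w :: x :: p)); rewrite Hc /=.
  by move: Hn; rewrite leqn0 subn_eq0 => Hn; rewrite ltnNge ltnW.
apply: (IH w (x :: p)) => //=.
by rewrite subnS -subn1 leq_subLR add1n.
Qed.

Lemma leafless_cycle K0 : K0 != set0 -> leafless K0 ->
  exists c, is_cycle e c /\ cycle_edges c \subset Eset K0.
Proof.
move=> /set0Pn[i iK] LL.
have U : uniq [:: u i; v i] by rewrite /= inE uv_neq.
have P : path (adj K0) (u i) [:: v i].
  by rewrite /= andbT; apply/existsP; exists i; rewrite iK eqxx.
have [c [Uc Sc Cc]] := grow LL (leqnn _) U P isT.
exists c; split.
  by rewrite /is_cycle Uc Sc (sub_cycle (@adj_e K0)).
apply/subsetP => E /imsetP[y]; rewrite inE => yc ->.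
have /existsP[j /andP[jK /eqP ->]] := next_cycle Cc yc.
by apply/imsetP; exists j.
Qed.

Lemma not_leaf_leafless K0 : ~~ [exists x, exists i, leafb K0 x i] -> leafless K0.
Proof.
move=> H x i iK xi; move: H; rewrite negb_exists => /forallP/(_ x).
rewrite negb_exists => /forallP/(_ i); rewrite /leafb iK xi /= negb_forall.
case/existsP => j; rewrite negb_imply => /andP[jK]; rewrite negb_imply => /andP[xj ji].
by exists j.
Qed.

Lemma card_Eset (K : {set 'I_s}) : #|Eset K| = #|K|.
Proof. by apply: card_in_imset => i j _ _; apply: edge_uniq. Qed.

Definition peelb (K : {set 'I_s}) := [forall K0 : {set 'I_s},
  (K0 \subset K) && (K0 != set0) ==> [exists x, exists i, leafb K0 x i]].

Lemma peel_sub (K1 K2 : {set 'I_s}) : K1 \subset K2 -> peelb K2 -> peelb K1.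
Proof.
move=> S /forallP H; apply/forallP => K0; apply/implyP => /andP[S0 n0].
by have /implyP := H K0; apply; rewrite n0 (subset_trans S0 S).
Qed.

Lemma notpeel K : ~~ peelb K -> exists (K0 : {set 'I_s}) (c : seq V),
  [/\ K0 \subset K, K0 != set0, is_cycle e c & cycle_edges c \subset Eset K0].
Proof.
rewrite negb_forall => /existsP[K0]; rewrite negb_imply => /andP[/andP[S0 n0] H].
have [c [Cc Sc]] := leafless_cycle n0 (not_leaf_leafless H).
by exists K0, c.
Qed.

Lemma peel_leaf (K : {set 'I_s}) : peelb K -> K != set0 -> exists x i, leafb K x i.
Proof.
move=> /forallP/(_ K); rewrite subxx /= => /implyP H /H.
by case/existsP => x /existsP[i L]; exists x, i.
Qed.

Definition niso (K : {set 'I_s}) := [set x | [exists j in K, x \in [set u j; v j]]].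

Lemma peel_small (K : {set 'I_s}) : peelb K -> K != set0 -> #|K| < #|niso K|.
Proof.
move: {2}#|K| (leqnn #|K|) => n; elim: n K => [|n IH] K Hn P n0.
  by move: n0; rewrite -card_gt0 ltnNge Hn.
have [x [i /and3P[iK xi /forallP Hl]]] := peel_leaf P n0.
have P' := peel_sub (subD1set K i) P.
have C : #|K| = #|K :\ i|.+1 by rewrite (cardsD1 i) iK.
have sub : niso (K :\ i) \proper niso K.
  apply/properP; split.
    apply/subsetP => y; rewrite !inE => /existsP[j /andP[]]; rewrite !inE => /andP[_ jK] yj.
    by apply/existsP; exists j; rewrite jK !inE.
  exists x; first by rewrite inE; apply/existsP; exists i; rewrite iK.
  rewrite inE; apply/negP => /existsP[j /andP[jKi xj]]; move: jKi; rewrite !inE => /andP[ji jK].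
  by have := Hl j; rewrite jK xj /= (negbTE ji).
case: (eqVneq (K :\ i) set0) => [E0|n1].
  have S2 : [set u i; v i] \subset niso K.
    by apply/subsetP => y yi; rewrite inE; apply/existsP; exists i; rewrite iK.
  have := subset_leq_card S2; rewrite cards2 uv_neq C E0 cards0.
  by [].
rewrite C; apply: leq_trans (proper_card sub).
by rewrite ltnS IH // -ltnS -C.
Qed.

Variable g : nat.
Hypothesis girth : forall c, is_cycle e c -> g <= size c.

Lemma cyc_card c : is_cycle e c -> #|cycle_edges c| = size c.
Proof. by case/and3P => U S _; apply: card_cycle_edges. Qed.

Lemma small_peel (K : {set 'I_s}) : #|K| < g -> peelb K.
Proof.
move=> Hk; apply: contraTT Hk => /notpeel[K0 [c [S0 _ Cc Sc]]].
rewrite -leqNgt; apply: leq_trans (girth Cc) _.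
rewrite -(cyc_card Cc); apply: leq_trans (subset_leq_card Sc) _.
by rewrite card_Eset subset_leq_card.
Qed.

Lemma g_peel (K : {set 'I_s}) : #|K| = g -> ~~ peelb K ->
  exists c, [/\ is_cycle e c, size c = g & cycle_edges c = Eset K].
Proof.
move=> Hk /notpeel[K0 [c [S0 _ Cc Sc]]].
have S1 : cycle_edges c \subset Eset K.
  by apply: subset_trans Sc _; apply: imsetS.
have L1 : size c <= g.
  by rewrite -(cyc_card Cc) -Hk -card_Eset subset_leq_card.
have L2 := girth Cc.
have Eg : size c = g by apply/eqP; rewrite eqn_leq L1 L2.
exists c; split => //; apply/eqP; rewrite eqEcard S1 /= card_Eset (cyc_card Cc) Eg Hk.
by [].
Qed.

Definition deg x (B : {set {set V}}) := #|[set E in B | x \in E]|.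

Lemma deg_add1 x (E : {set V}) (B : {set {set V}}) : E \notin B -> deg x (E |: B) = (x \in E) + deg x B.
Proof.
move=> EB; rewrite /deg; case xE: (x \in E).
  have -> : [set E' in E |: B | x \in E'] = E |: [set E' in B | x \in E'].
    apply/setP => E'; rewrite !inE; case: eqP => [->|] //=; by rewrite xE.
  by rewrite cardsU1 inE (negbTE EB).
apply: eq_card => E'; rewrite !inE; case: eqP => [->|] //=; by rewrite xE andbF.
Qed.

Lemma deg_cyc x c : is_cycle e c -> ~~ odd (deg x (cycle_edges c)).
Proof. by case/and3P => U S _; rewrite /deg deg_cycle_edges // odd_double. Qed.

Lemma Eset_U1 i (K : {set 'I_s}) : Eset (i |: K) = [set u i; v i] |: Eset K.
Proof. by rewrite /Eset imsetU1. Qed.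

Lemma notin_Eset i (K : {set 'I_s}) : i \notin K -> [set u i; v i] \notin Eset K.
Proof.
move=> iK; apply/imsetP => -[j jK /edge_uniq ij].
by rewrite ij jK in iK.
Qed.

Hypothesis g3 : 3 <= g.

Lemma big_peel_base (K : {set 'I_s}) : #|K| = g.+1 ->
  exists K' : {set 'I_s}, [/\ K' \subset K, #|K'| = g & peelb K'].
Proof.
move=> Hk.
have /set0Pn[i1 i1K] : K != set0 by rewrite -card_gt0 Hk.
have C1 : #|K :\ i1| = g by move: Hk; rewrite (cardsD1 i1) i1K => -[].
case P1: (peelb (K :\ i1)).
  by exists (K :\ i1); rewrite subD1set.
have /set0Pn[i2 i2K1] : K :\ i1 != set0 by rewrite -card_gt0 C1 (leq_trans _ g3).
have /andP[i21 i2K] : (i2 != i1) && (i2 \in K) by move: i2K1; rewrite !inE.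
have C2 : #|K :\ i2| = g by move: Hk; rewrite (cardsD1 i2) i2K => -[].
case P2: (peelb (K :\ i2)).
  by exists (K :\ i2); rewrite subD1set.
have [c1 [Cc1 _ E1]] : exists c, [/\ is_cycle e c, size c = g & cycle_edges c = Eset (K :\ i1)].
  by apply: g_peel; rewrite ?P1.
have [c2 [Cc2 _ E2]] : exists c, [/\ is_cycle e c, size c = g & cycle_edges c = Eset (K :\ i2)].
  by apply: g_peel; rewrite ?P2.
set A := K :\ i1 :\ i2.
have A1 : K :\ i1 = i2 |: A by rewrite /A setD1K.
have A2 : K :\ i2 = i1 |: A.
  have -> : A = K :\ i2 :\ i1 by rewrite /A !setDDl setUC.
  by rewrite setD1K // !inE i1K andbT eq_sym.
have n1 : i1 \notin A by rewrite !inE eqxx andbF.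
have n2 : i2 \notin A by rewrite !inE eqxx.
have [x [x1 x2]] : exists x, x \in [set u i1; v i1] /\ x \notin [set u i2; v i2].
  case: (boolP ([set u i1; v i1] \subset [set u i2; v i2])) => [S12|].
    have := edge_uniq (_ : [set u i1; v i1] = [set u i2; v i2]).
    move=> H; suff: i1 = i2 by move=> E; rewrite E eqxx in i21.
    apply: H; apply/eqP; rewrite eqEcard S12 /= !cards2 !uv_neq.
    by [].
  by case/subsetPn => x; exists x.
have := deg_cyc x Cc1; rewrite E1 A1 Eset_U1 deg_add1 ?notin_Eset // (negbTE x2) add0n.
have := deg_cyc x Cc2; rewrite E2 A2 Eset_U1 deg_add1 ?notin_Eset // x1 add1n /=.
by move=> /negPn ->.
Qed.

Lemma big_peel (K : {set 'I_s}) : g.+1 <= #|K| ->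
  exists K' : {set 'I_s}, [/\ K' \subset K, #|K'| = g & peelb K'].
Proof.
move=> Hk; have [n Hn] : exists n, #|K| = n + g.+1 by exists (#|K| - g.+1); rewrite subnK.
elim: n K {Hk} Hn => [|n IH] K Hn; first exact: big_peel_base.
have /set0Pn[i iK] : K != set0 by rewrite -card_gt0 Hn addSn.
have [|K' [S C P]] := IH (K :\ i).
  by move: Hn; rewrite (cardsD1 i) iK addSn => -[].
by exists K'; split => //; apply: subset_trans S (subD1set _ _).
Qed.

End Graph.


Section Count.
Variables (V W : finType) (e : rel V) (hE : rel W) (L : V -> {set W}) (m : nat).
Variables (s : nat) (u v : 'I_s -> V).
Hypothesis esym : symmetric e.
Hypothesis eirr : irreflexive e.
Hypothesis hsym : symmetric hE.
Hypothesis euv : forall i, e (u i) (v i).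
Hypothesis cov : is_mfold_cover e hE L m.
Hypothesis cross : forall a b, e a b -> #|cross_edges hE (L a) (L b)| = m.

Lemma cardL a : #|L a| = m. Proof. by case: cov => _ ->. Qed.

Lemma mate_uniq a b y x x' : e a b -> y \in L b -> x \in L a -> x' \in L a ->
  hE x y -> hE x' y -> x = x'.
Proof.
case: cov => -[_ _ _ _ H4] _ eab yb xa x'a h1 h2.
have eba : e b a by rewrite esym.
have h1' : hE y x by rewrite hsym.
have h2' : hE y x' by rewrite hsym.
exact: (H4 b a eba y x x' yb xa x'a h1' h2').
Qed.

Lemma mate_ex a b y : e a b -> y \in L b -> exists2 x, x \in L a & hE x y.
Proof.
move=> eab yb.
pose Bm := [set y in L b | [exists x in L a, hE x y]].
pose h y := [set odflt y [pick x in L a | hE x y]; y].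
have S : cross_edges hE (L a) (L b) \subset h @: Bm.
  apply/subsetP => E /imset2P[x y' xa]; rewrite !inE => /andP[y'b hxy] ->.
  apply/imsetP; exists y'.
    by rewrite inE y'b; apply/existsP; exists x; rewrite xa.
  rewrite /h; case: pickP => [x' /andP[x'a hx'y]|/(_ x)]; last by rewrite xa hxy.
  by rewrite /= (mate_uniq eab y'b x'a xa hx'y hxy).
have SB : Bm \subset L b by apply/subsetP => z; rewrite inE => /andP[].
have : Bm == L b.
  rewrite eqEcard SB /= cardL -(cross eab).
  by apply: leq_trans (subset_leq_card S) (leq_imset_card _ _).
move/eqP => EB; move: yb; rewrite -EB inE => /andP[_ /existsP[x /andP[xa hxy]]].
by exists x.
Qed.

Definition Fset (K : {set 'I_s}) := [set f : {ffun V -> W} |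
  [forall w, f w \in L w] && [forall i in K, hE (f (u i)) (f (v i))]].

Lemma card_F0 : #|Fset set0| = m ^ #|V|.
Proof.
have -> : #|Fset set0| = #|(family (fun w => mem (L w)) : simpl_pred {ffun V -> W})|.
  apply: eq_card => f; rewrite !inE.
  apply/andP/familyP => [[/forallP H _] w|H]; first exact: H.
  by split; apply/forallP => // i; rewrite inE.
rewrite card_family /image_mem cardE.
elim: (enum V) => //= a r ->.
by rewrite cardL expnS.
Qed.

Definition upd (f : {ffun V -> W}) x w := [ffun z => if z == x then w else f z].

Lemma leaf_step K x i : leafb u v K x i -> #|Fset (K :\ i)| = #|Fset K| * m.
Proof.
case/and3P => iK xi /forallP Hl.
have Hl' j : j \in K -> x \in [set u j; v j] -> j = i.
  by move=> jK xj; have := Hl j; rewrite jK xj => /eqP.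
have [y [Ey exy hi]] : exists y, [/\ [set x; y] = [set u i; v i], e x y &
    forall f : {ffun V -> W}, hE (f (u i)) (f (v i)) = hE (f x) (f y)].
  case/set2P: xi => ->.
    by exists (v i); split => //; exact: euv.
  exists (u i); split => [|| f]; [exact: setUC | by rewrite esym euv | exact: hsym].
have yx : y != x by apply: contraTneq exy => ->; rewrite eirr.
have nx j : j \in K -> j != i -> (u j != x) && (v j != x).
  move=> jK ji; apply/andP; split; apply: contraNneq ji => E;
  by apply/eqP/Hl'; rewrite // E !inE eqxx ?orbT.
pose mt (w : W) := odflt w [pick z in L x | hE z w].
have mtP w : w \in L y -> mt w \in L x /\ hE (mt w) w.
  move=> wy; rewrite /mt; case: pickP => [z /andP[]|] //.
  have [z zx hz] := mate_ex exy wy.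
  by move/(_ z); rewrite zx hz.
pose Phi (f : {ffun V -> W}) := (upd f x (mt (f y)), f x).
have Phi_inj : injective Phi.
  move=> f1 f2 [E1 E2]; apply/ffunP => z.
  case: (eqVneq z x) => [->//|zx].
  by move/ffunP: E1 => /(_ z); rewrite /upd !ffunE (negbTE zx).
have -> : #|Fset K| * m = #|setX (Fset K) (L x)| by rewrite cardsX cardL.
rewrite -(card_imset _ Phi_inj); apply: eq_card => -[g w].
apply/imsetP/idP.
  case=> f; rewrite !inE => /andP[/forallP fL /forallP fK] [-> ->].
  rewrite fL andbT; have [mx hm] := mtP (f y) (fL y).
  apply/andP; split.
    by apply/forallP => z; rewrite ffunE; case: eqP => [->|]; rewrite ?fL.
  apply/forallP => j; apply/implyP => jK.
  case: (eqVneq j i) => [->|ji].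
    by rewrite hi !ffunE eqxx (negbTE yx).
  have /andP[ujx vjx] := nx j jK ji.
  have := fK j; rewrite !inE ji jK /= !ffunE (negbTE ujx) (negbTE vjx).
  by [].
rewrite !inE => /andP[/andP[/forallP gL /forallP gK] wx].
have gi : hE (g x) (g y) by have := gK i; rewrite iK /= hi.
exists (upd g x w).
  rewrite inE; apply/andP; split.
    by apply/forallP => z; rewrite ffunE; case: eqP => [->|]; rewrite ?gL.
  apply/forallP => j; apply/implyP; rewrite !inE => /andP[ji jK].
  have /andP[ujx vjx] := nx j jK ji.
  by have := gK j; rewrite jK !ffunE (negbTE ujx) (negbTE vjx).
rewrite /Phi !ffunE eqxx (negbTE yx); congr (_, _).
have [mx hm] := mtP (g y) (gL y).
have -> : mt (g y) = g x by apply: (mate_uniq exy (gL y) mx (gL x) hm gi).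
by apply/ffunP => z; rewrite !ffunE; case: eqP => [->|].
Qed.

Lemma peel_count (K : {set 'I_s}) : peelb u v K -> #|Fset K| * m ^ #|K| = m ^ #|V|.
Proof.
move: {2}#|K| (leqnn #|K|) => n; elim: n K => [|n IH] K Hn P.
  move: Hn; rewrite leqn0 cards_eq0 => /eqP ->; by rewrite cards0 muln1 card_F0.
case: (eqVneq K set0) => [->|n0]; first by rewrite cards0 muln1 card_F0.
have [x [i Lf]] := peel_leaf P n0.
have iK : i \in K by case/and3P: Lf.
have C : #|K| = #|K :\ i|.+1 by rewrite (cardsD1 i) iK.
have := IH (K :\ i); rewrite (leaf_step Lf) C expnS mulnA.
apply; first by rewrite -ltnS -C.
exact: peel_sub (subD1set K i) P.
Qed.

Lemma Ldisj a b z : z \in L a -> z \in L b -> a = b.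
Proof.
case: cov => -[_ H2 _ _ _] _ za zb; case: (eqVneq a b) => // ab.
by have := disjointFr (H2 a b ab) za; rewrite zb.
Qed.

Definition phi (f : {ffun V -> W}) := [set f w | w in [set: V]].

Lemma bigcap_F (K : {set 'I_s}) : K != set0 ->
  #|\bigcap_(i in K) S_edge hE L (u i) (v i)| = #|Fset K|.
Proof.
move=> /set0Pn[i0 i0K].
have phiL f w : f \in Fset K -> L w :&: phi f = [set f w].
  rewrite inE => /andP[/forallP fL _]; apply/setP => z; rewrite !inE.
  apply/andP/eqP => [[zw /imsetP[w' _ zE]]|->]; last first.
    by split; [exact: fL | apply/imsetP; exists w].
  by rewrite zE; rewrite zE in zw; rewrite (Ldisj zw (fL w')).
have inj : {in Fset K &, injective phi}.
  move=> f1 f2 f1K f2K E; apply/ffunP => w.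
  by apply/set1P; rewrite -(phiL f2 w f2K) -E phiL // set11.
rewrite -(card_in_imset inj); apply: eq_card => I.
apply/bigcapP/imsetP.
  move=> HI; have /setIdP[IT0 _] := HI i0 i0K.
  have IT : forall w, #|L w :&: I| == 1 by move: IT0; rewrite inE => /forallP.
  case: (set_0Vmem (L (u i0) :&: I)) => [E0|[w0 _]].
    by have := IT (u i0); rewrite E0 cards0.
  pose f := [ffun w => odflt w0 [pick z in L w :&: I]].
  have fP w : L w :&: I = [set f w].
    have /cards1P[z Ez] := IT w; rewrite Ez ffunE.
    case: pickP => [z' |/(_ z)]; last by rewrite Ez inE eqxx.
    by rewrite Ez => /set1P ->.
  have fLI w : (f w \in L w) && (f w \in I).
    by have := set11 (f w); rewrite -fP inE.
  have Iphi : I = phi f.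
    apply/setP => z; apply/idP/imsetP => [zI|[w _ ->]]; last by case/andP: (fLI w).
    case: cov => -[H1 _ _ _ _] _; have [w zw] := H1 z.
    by exists w => //; apply/set1P; rewrite -fP inE zw.
  exists f => //; rewrite inE; apply/andP; split.
    by apply/forallP => w; case/andP: (fLI w).
  apply/forallP => j; apply/implyP => jK.
  have /setIdP[_ /existsP[x /existsP[y /and3P[xI yI]]]] := HI j jK.
  case/imset2P => a b aL; rewrite inE => /andP[bL hab] Exy.
  have aI : a \in I.
    have : a \in [set x; y] by rewrite Exy !inE eqxx.
    by case/set2P => ->.
  have bI : b \in I.
    have : b \in [set x; y] by rewrite Exy !inE eqxx orbT.
    by case/set2P => ->.
  have /set1P <- : a \in [set f (u j)] by rewrite -fP inE aL.
  by have /set1P <- : b \in [set f (v j)] by rewrite -fP inE bL.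
case=> f fK ->{I} j jK; rewrite inE; apply/andP; split.
  by rewrite inE; apply/forallP => w; rewrite phiL // cards1.
have /andP[/forallP fL /forallP fC] : [forall w, f w \in L w] &&
   [forall i in K, hE (f (u i)) (f (v i))] by move: fK; rewrite inE.
apply/existsP; exists (f (u j)); apply/existsP; exists (f (v j)).
rewrite !imset_f ?inE //=; apply/imset2P; exists (f (u j)) (f (v j)) => //.
by rewrite inE fL /=; have := fC j; rewrite jK.
Qed.

End Count.


Section Main.
Variables (V W : finType) (e : rel V) (hE : rel W) (L : V -> {set W}) (m : nat).
Variables (s : nat) (u v : 'I_s -> V).
Hypothesis esym : symmetric e.
Hypothesis eirr : irreflexive e.
Hypothesis hsym : symmetric hE.
Hypothesis euv : forall i, e (u i) (v i).
Hypothesis cov : is_mfold_cover e hE L m.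
Hypothesis cross : forall a b, e a b -> #|cross_edges hE (L a) (L b)| = m.

Notation BC K := (\bigcap_(i in K) S_edge hE L (u i) (v i)).

Lemma peel_exact (K : {set 'I_s}) : peelb u v K -> K != set0 ->
  #|BC K| = m ^ (#|V| - #|K|).
Proof.
move=> P n0; rewrite (bigcap_F u v cov n0).
have Hk : #|K| < #|V|.
  apply: leq_trans (peel_small eirr euv P n0) _; exact: max_card.
have F0 := card_F0 u v cov.
case: (posnP m) => [m0|mpos].
  have : #|Fset hE L u v K| <= #|Fset hE L u v set0|.
    apply: subset_leq_card; apply/subsetP => f; rewrite !inE => /andP[-> _].
    by apply/forallP => i; rewrite inE.
  rewrite F0 m0 exp0n; last exact: leq_ltn_trans (leq0n _) Hk.
  rewrite leqn0 => /eqP ->; rewrite exp0n // subn_gt0.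
  by [].
have := peel_count esym eirr hsym euv cov cross P.
have E : m ^ #|V| = m ^ (#|V| - #|K|) * m ^ #|K| by rewrite -expnD subnK // ltnW.
by move=> H; apply/eqP; rewrite -(@eqn_pmul2r (m ^ #|K|)) ?expn_gt0 ?mpos // H E eqxx.
Qed.

Lemma BC_mono (K1 K2 : {set 'I_s}) : K1 \subset K2 -> #|BC K2| <= #|BC K1|.
Proof.
move=> S; apply: subset_leq_card; apply/bigcapsP => i iK.
by apply: bigcap_inf; apply: (subsetP S).
Qed.

End Main.


Theorem lemma11 (V W : finType) (e : rel V) (hE : rel W)
  (s g m : nat) (u v : 'I_s -> V) (L : V -> {set W}) :
  simple_graph e -> simple_graph hE ->
  3 <= #|V| -> 3 <= s ->
  (* e_1, ..., e_s is an enumeration of the edges of G, e_i = u_i v_i *)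
  (forall i, e (u i) (v i)) ->
  (forall i j, i != j -> [set u i; v i] != [set u j; v j]) ->
  (forall x y, e x y -> exists i, [set x; y] = [set u i; v i]) ->
  has_girth e g ->
  is_mfold_cover e hE L m ->
  (forall a b, e a b -> #|cross_edges hE (L a) (L b)| = m) ->
  let S := fun i => S_edge hE L (u i) (v i) in
  (* (i) *)
  (forall K : {set 'I_s}, 1 <= #|K| <= g - 1 ->
     #|\bigcap_(i in K) S i| = m ^ (#|V| - #|K|)) /\
  (* (ii) *)
  (forall K : {set 'I_s}, #|K| = g ->
     #|\bigcap_(i in K) S i| <= m ^ (#|V| - g + 1) /\
     (~ (exists c, is_cycle e c /\ size c = g /\
           cycle_edges c = [set [set u i; v i] | i in K]) ->
      #|\bigcap_(i in K) S i| = m ^ (#|V| - g))) /\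
  (* (iii) *)
  (forall K : {set 'I_s}, g + 1 <= #|K| ->
     #|\bigcap_(i in K) S i| <= m ^ (#|V| - g)).
Proof.
move=> [esym eirr] [hsym _] n3 _ euv inj _ [[c0 [Cc0 Sc0]] girth] cov cross S; rewrite /S.
have g3 : 2 < g by rewrite -Sc0; case/and3P: Cc0.
have gn : g <= #|V|.
  rewrite -Sc0; case/and3P: Cc0 => U _ _; rewrite -(card_uniqP U); exact: max_card.
have ne (K : {set 'I_s}) : 0 < #|K| -> K != set0 by rewrite card_gt0.
split; [|split].
- move=> K /andP[k1 kg]; apply: peel_exact => //; last exact: ne.
  apply: (small_peel esym eirr euv inj girth).
  by lia.
- move=> K Kg; split.
    have /set0Pn[i iK] : K != set0 by apply: ne; lia.
    have C : #|K :\ i| = g.-1 by move: Kg; rewrite (cardsD1 i) iK; lia.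
    apply: leq_trans (BC_mono hE L u v (subD1set K i)) _.
    rewrite (peel_exact esym eirr hsym euv cov cross) //.
    + by rewrite C; have -> : #|V| - g.-1 = #|V| - g + 1 by lia.
    + by apply: (small_peel esym eirr euv inj girth); rewrite C; lia.
    + by apply: ne; rewrite C; lia.
  move=> NC; case P: (peelb u v K).
    by rewrite (peel_exact esym eirr hsym euv cov cross) // ?Kg // ne // Kg; lia.
  have [c [Cc Sc Ec]] := g_peel esym eirr euv inj girth Kg (negbT P).
  by exfalso; apply: NC; exists c.
- move=> K Kg.
  have gK : g < #|K| by lia.
  have [K' [S' C' P']] := big_peel esym eirr euv inj girth g3 gK.
  apply: leq_trans (BC_mono hE L u v S') _.
  by rewrite (peel_exact esym eirr hsym euv cov cross) // ?C' // ne // C'; lia.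
Qed.
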